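(* Let $p\ge1$, $m=2p$, $j=\mathrm{diag}(I_p,-I_p)$, $n>0$. Let $A$ be an $n\times n$ matrix with $\det A\neq0$, $S_0=S_0^*$ an $n\times n$ matrix and $\Pi_0$ an $n\times m$ matrix with $AS_0-S_0A^*=i\Pi_0j\Pi_0^*$. Define for $k\ge0$ $$\Pi_{k+1}=\Pi_k+iA^{-1}\Pi_kj,\qquad S_{k+1}=S_k+A^{-1}S_k(A^* )^{-1}+A^{-1}\Pi_k\Pi_k^*(A^* )^{-1}.$$ Suppose $\det S_r\neq0$ for $0\le r\le N$. Then the matrices $C_k=I_m+\Pi_k^*S_k^{-1}\Pi_k-\Pi_{k+1}^*S_{k+1}^{-1}\Pi_{k+1}$, $0\le k<N$, satisfy $C_k=C_k^*$ and $C_kjC_k=j$.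
   Context: $I_r$ denotes the $r\times r$ identity matrix. *)

(* Defs.v *)
From HB Require Import structures.
From mathcomp Require Import all_boot all_order all_algebra.
From mathcomp Require Import all_reals.
From mathcomp.real_closed Require Import complex.
Set Implicit Arguments. Unset Strict Implicit. Unset Printing Implicit Defensive.
Import Order.TTheory GRing.Theory Num.Theory.
Local Open Scope ring_scope.

Definition adj {C : numClosedFieldType} {m n : nat} (M : 'M[C]_(m, n)) : 'M[C]_(n, m) :=
  (map_mx Num.conj M)^T.

Definition Jmx {C : numClosedFieldType} (p : nat) : 'M[C]_(p + p) :=
  block_mx 1%:M 0 0 (- 1%:M).

Fixpoint Pi_seq {C : numClosedFieldType} (n p : nat) (A : 'M[C]_n)
   (Pi0 : 'M[C]_(n, p + p)) (k : nat) : 'M[C]_(n, p + p) :=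
  match k with
  | 0 => Pi0
  | k'.+1 => let P := Pi_seq A Pi0 k' in
             P + 'i *: (invmx A *m P *m Jmx p)
  end.

Fixpoint S_seq {C : numClosedFieldType} (n p : nat) (A : 'M[C]_n) (S0 : 'M[C]_n)
   (Pi0 : 'M[C]_(n, p + p)) (k : nat) : 'M[C]_n :=
  match k with
  | 0 => S0
  | k'.+1 => let S := S_seq A S0 Pi0 k' in
             let P := Pi_seq A Pi0 k' in
             S + invmx A *m S *m invmx (adj A)
               + invmx A *m (P *m adj P) *m invmx (adj A)
  end.

Definition C_mx {C : numClosedFieldType} (n p : nat) (A : 'M[C]_n) (S0 : 'M[C]_n)
   (Pi0 : 'M[C]_(n, p + p)) (k : nat) : 'M[C]_(p + p) :=
  1%:M + adj (Pi_seq A Pi0 k) *m invmx (S_seq A S0 Pi0 k) *m Pi_seq A Pi0 k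
   - adj (Pi_seq A Pi0 k.+1) *m invmx (S_seq A S0 Pi0 k.+1) *m Pi_seq A Pi0 k.+1.

(* Main.v *)
Require Import Defs.
From HB Require Import structures.
From mathcomp Require Import all_boot all_order all_algebra.
From mathcomp Require Import all_reals.
From mathcomp.real_closed Require Import complex.
From mathcomp Require Import ring.
Import Order.TTheory GRing.Theory Num.Theory.
Local Open Scope ring_scope.

Lemma adjM (C : numClosedFieldType) m n k (A : 'M[C]_(m,n)) (B : 'M[C]_(n,k)) :
  adj (A *m B) = adj B *m adj A.
Proof. by rewrite /adj map_mxM trmx_mul. Qed.
Lemma adjD (C : numClosedFieldType) m n (A B : 'M[C]_(m,n)) :
  adj (A + B) = adj A + adj B.
Proof. by rewrite /adj map_mxD linearD. Qed.
Lemma adjN (C : numClosedFieldType) m n (A : 'M[C]_(m,n)) :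
  adj (- A) = - adj A.
Proof. by rewrite /adj map_mxN linearN. Qed.
Lemma adjB (C : numClosedFieldType) m n (A B : 'M[C]_(m,n)) :
  adj (A - B) = adj A - adj B.
Proof. by rewrite adjD adjN. Qed.
Lemma adjZ (C : numClosedFieldType) m n (a : C) (A : 'M[C]_(m,n)) :
  adj (a *: A) = a^* *: adj A.
Proof. by apply/matrixP => i j; rewrite /adj !mxE rmorphM. Qed.
Lemma adjK (C : numClosedFieldType) m n (A : 'M[C]_(m,n)) : adj (adj A) = A.
Proof. by apply/matrixP => i j; rewrite /adj !mxE conjCK. Qed.
Lemma adj1 (C : numClosedFieldType) n : adj (1%:M : 'M[C]_n) = 1%:M.
Proof. by rewrite /adj map_mx1 trmx1. Qed.
Lemma adjV (C : numClosedFieldType) n (A : 'M[C]_n) : adj (invmx A) = invmx (adj A).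
Proof. by rewrite /adj map_invmx trmx_inv. Qed.
Lemma adjJ (C : numClosedFieldType) p : adj (Jmx p : 'M[C]_(p+p)) = Jmx p.
Proof.
rewrite /adj /Jmx map_block_mx tr_block_mx.
rewrite map_mxN linearN !map_mx1 !trmx1; congr block_mx; apply/matrixP => i j; rewrite !mxE.
- exact: (rmorph0 Num.conj_op).
- exact: (rmorph0 Num.conj_op).
- by rewrite eq_sym.
Qed.
Lemma JJ (C : numClosedFieldType) p : (Jmx p : 'M[C]_(p+p)) *m Jmx p = 1%:M.
Proof.
rewrite /Jmx mulmx_block !mulmx0 !mul0mx !addr0 !add0r mulmx1 mulmxN mulmx1 opprK.
by rewrite -scalar_mx_block.
Qed.

Ltac genprod := repeat match goal with |- context [?a *m ?b] => let t := fresh "t" in set t := (a *m b); clearbody t end.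

Ltac norm := rewrite ?mulmxDl ?mulmxDr ?mulmxBl ?mulmxBr ?mulmxN ?mulNmx -?scalemxAl -?scalemxAr ?mulmxA ?scalerA ?scalerDr ?scalerBr ?scaleNr ?scalerN ?opprD ?opprK.

Lemma step_inv (C : numClosedFieldType) n m (A B S : 'M[C]_n) (P : 'M[C]_(n,m)) (J : 'M[C]_m) :
  A *m B = 1%:M -> B *m A = 1%:M -> adj J = J -> J *m J = 1%:M -> adj S = S ->
  A *m S - S *m adj A = 'i *: (P *m J *m adj P) ->
  adj (S + B *m S *m adj B + B *m (P *m adj P) *m adj B) = S + B *m S *m adj B + B *m (P *m adj P) *m adj B /\
  A *m (S + B *m S *m adj B + B *m (P *m adj P) *m adj B) - (S + B *m S *m adj B + B *m (P *m adj P) *m adj B) *m adj A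
   = 'i *: ((P + 'i *: (B *m P *m J)) *m J *m adj (P + 'i *: (B *m P *m J))).
Proof.
move=> hAB hBA hJ hJJ hS h.
have hBA' : adj B *m adj A = 1%:M by rewrite -adjM hAB adj1.
have eAB : forall k (X : 'M_(k,n)), X *m A *m B = X by move=> k X; rewrite -mulmxA hAB mulmx1.
have eBA' : forall k (X : 'M_(k,n)), X *m adj B *m adj A = X by move=> k X; rewrite -mulmxA hBA' mulmx1.
have eJJ : forall k (X : 'M_(k,m)), X *m J *m J = X by move=> k X; rewrite -mulmxA hJJ mulmx1.
split.
  by rewrite !adjD !adjM !adjK hS -!mulmxA.
have hAB' : adj A *m adj B = 1%:M by rewrite -adjM hBA adj1.
have hSB : S *m adj B - B *m S = 'i *: (B *m P *m J *m adj P *m adj B).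
  have -> : S *m adj B - B *m S = B *m (A *m S - S *m adj A) *m adj B.
    by rewrite mulmxBr mulmxBl !mulmxA hBA mul1mx -!mulmxA hAB' mulmx1.
  by rewrite h -scalemxAr -scalemxAl !mulmxA.
rewrite !adjD !adjZ !adjM hJ conjCi.
do 4 norm.
rewrite ?hAB ?hBA' ?eAB ?eBA' ?eJJ ?hJJ ?mul1mx ?mulmx1 ?mulrN ?mulCii ?opprK ?scale1r ?scaleN1r.
rewrite mulrN1 !scaleNr !opprK -h -hSB.
by apply/matrixP => i j; rewrite !mxE; ring.
Qed.

Lemma invid (C : numClosedFieldType) n m (A S X : 'M[C]_n) (P : 'M[C]_(n,m)) (J : 'M[C]_m) :
  S *m X = 1%:M -> X *m S = 1%:M ->
  A *m S - S *m adj A = 'i *: (P *m J *m adj P) ->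
  X *m P *m J *m adj P *m X = - 'i *: (X *m A - adj A *m X).
Proof.
move=> hSX hXS h.
have e : X *m (A *m S - S *m adj A) *m X = X *m A - adj A *m X.
  by rewrite mulmxBr mulmxBl !mulmxA -(mulmxA _ S X) hSX mulmx1 hXS mul1mx.
rewrite -e h -scalemxAr -scalemxAl scalerA mulNr mulCii opprK scale1r.
by rewrite !mulmxA.
Qed.

Lemma cross (C : numClosedFieldType) n m (A B S X Y : 'M[C]_n) (P : 'M[C]_(n,m)) (J : 'M[C]_m) :
  A *m B = 1%:M -> adj J = J -> J *m J = 1%:M ->
  X *m S = 1%:M ->
  (S + B *m S *m adj B + B *m (P *m adj P) *m adj B) *m Y = 1%:M ->
  A *m S - S *m adj A = 'i *: (P *m J *m adj P) ->
  X *m P *m J *m adj (P + 'i *: (B *m P *m J)) *m Y = - 'i *: (X *m A - (adj A + adj B) *m Y).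
Proof.
set S' := (S + _ + _).
move=> hAB hJ hJJ hXS hY h.
have hP : P *m J *m adj P = - 'i *: (A *m S - S *m adj A).
  by rewrite h scalerA mulNr mulCii opprK scale1r.
have e1 : P *m J *m adj (P + 'i *: (B *m P *m J)) = - 'i *: (A *m S' - S *m (adj A + adj B)).
  rewrite adjD adjZ !adjM hJ conjCi /S'.
  do 4 norm.
  rewrite ?hAB ?mul1mx -?(mulmxA _ J J) ?hJJ ?mulmx1 hP.
  do 2 norm.
  by apply/matrixP => i j; rewrite !mxE; ring.
have -> : X *m P *m J *m adj (P + 'i *: (B *m P *m J)) *m Y = X *m (P *m J *m adj (P + 'i *: (B *m P *m J))) *m Y by rewrite !mulmxA.
rewrite e1 -scalemxAr -scalemxAl; congr (_ *: _).
rewrite mulmxBr mulmxBl !mulmxA -(mulmxA _ S' Y) hY mulmx1 hXS mul1mx.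
done.
Qed.

Lemma expand3 (C : numClosedFieldType) m (E F J : 'M[C]_m) :
  (1%:M + E - F) *m J *m (1%:M + E - F) =
  J + E *m J + J *m E - F *m J - J *m F + E *m J *m E - E *m J *m F - F *m J *m E + F *m J *m F.
Proof.
do 3 norm. rewrite ?mul1mx ?mulmx1.
genprod.
by apply/matrixP => i j; rewrite !mxE; ring.
Qed.

Lemma key (C : numClosedFieldType) n m (A B X Y : 'M[C]_n) (P Q : 'M[C]_(n,m)) (J : 'M[C]_m) :
  A *m B = 1%:M -> adj J = J -> J *m J = 1%:M -> adj X = X -> adj Y = Y ->
  Q = P + 'i *: (B *m P *m J) ->
  X *m P *m J *m adj P *m X = - 'i *: (X *m A - adj A *m X) ->
  Y *m Q *m J *m adj Q *m Y = - 'i *: (Y *m A - adj A *m Y) ->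
  X *m P *m J *m adj Q *m Y = - 'i *: (X *m A - (adj A + adj B) *m Y) ->
  (1%:M + adj P *m X *m P - adj Q *m Y *m Q) *m J *m (1%:M + adj P *m X *m P - adj Q *m Y *m Q) = J.
Proof.
move=> hAB hJ hJJ hX hY hQ ha hb hc.
have hc' : Y *m Q *m J *m adj P *m X = 'i *: (adj A *m X - Y *m (A + B)).
  have := congr1 (@adj _ _ _) hc.
  rewrite !adjM adjZ !adjK hX hY hJ adjB !adjM adjD !adjK hX hY raddfN /= conjCi opprK.
  by rewrite !mulmxA => ->.
have hBA : adj B *m adj A = 1%:M by rewrite -adjM hAB adj1.
have ga : forall k (Z : 'M_(k,n)), Z *m X *m P *m J *m adj P *m X = Z *m (- 'i *: (X *m A - adj A *m X)).
  by move=> k Z; rewrite -ha !mulmxA.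
have gb : forall k (Z : 'M_(k,n)), Z *m Y *m Q *m J *m adj Q *m Y = Z *m (- 'i *: (Y *m A - adj A *m Y)).
  by move=> k Z; rewrite -hb !mulmxA.
have gc : forall k (Z : 'M_(k,n)), Z *m X *m P *m J *m adj Q *m Y = Z *m (- 'i *: (X *m A - (adj A + adj B) *m Y)).
  by move=> k Z; rewrite -hc !mulmxA.
have gc' : forall k (Z : 'M_(k,n)), Z *m Y *m Q *m J *m adj P *m X = Z *m ('i *: (adj A *m X - Y *m (A + B))).
  by move=> k Z; rewrite -hc' !mulmxA.
have r1 : A *m Q = A *m P + 'i *: (P *m J).
  by rewrite hQ mulmxDr -scalemxAr !mulmxA hAB mul1mx.
have r2 : adj Q *m adj A = adj P *m adj A - 'i *: (J *m adj P).
  by rewrite -adjM r1 adjD adjZ conjCi !adjM hJ scaleNr.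
have r3 : Q *m J = P *m J + 'i *: (B *m P).
  by rewrite hQ mulmxDl -scalemxAl -mulmxA hJJ mulmx1.
have r4 : J *m adj Q = J *m adj P - 'i *: (adj P *m adj B).
  by rewrite -[J in LHS]hJ -adjM r3 adjD adjZ conjCi !adjM hJ scaleNr.
rewrite expand3.
have -> : adj P *m X *m P *m J *m (adj P *m X *m P) = - 'i *: (adj P *m X *m (A *m P) - adj P *m adj A *m X *m P).
  by rewrite !mulmxA ga -scalemxAr -scalemxAl mulmxBr mulmxBl !mulmxA.
have -> : adj P *m X *m P *m J *m (adj Q *m Y *m Q) = - 'i *: (adj P *m X *m (A *m Q) - adj P *m (adj A + adj B) *m Y *m Q).
  by rewrite !mulmxA gc -scalemxAr -scalemxAl mulmxBr mulmxBl !mulmxA.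
have -> : adj Q *m Y *m Q *m J *m (adj P *m X *m P) = 'i *: ((adj Q *m adj A) *m X *m P - adj Q *m Y *m (A + B) *m P).
  by rewrite !mulmxA gc' -scalemxAr -scalemxAl mulmxBr mulmxBl !mulmxA.
have -> : adj Q *m Y *m Q *m J *m (adj Q *m Y *m Q) = - 'i *: (adj Q *m Y *m (A *m Q) - (adj Q *m adj A) *m Y *m Q).
  by rewrite !mulmxA gb -scalemxAr -scalemxAl mulmxBr mulmxBl !mulmxA.
have -> : adj Q *m Y *m Q *m J = adj Q *m Y *m (Q *m J) by rewrite !mulmxA.
have -> : J *m (adj Q *m Y *m Q) = (J *m adj Q) *m Y *m Q by rewrite !mulmxA.
rewrite r1 r2 r3 r4.
do 3 norm.
rewrite ?mulrN ?mulNr ?mulCii ?opprK ?mulN1r ?mulrN1 ?mul1r ?opprK ?scaleNr ?scale1r ?opprK.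
genprod.
by apply/matrixP => i j; rewrite !mxE; ring.
Qed.

Local Open Scope complex_scope.
Theorem proposition2p3 (R : realType) (p n N : nat) (hp : (1 <= p)%N) (hn : (0 < n)%N)
  (A S0 : 'M[R[i]]_n) (Pi0 : 'M[R[i]]_(n, p + p)) :
  \det A != 0 ->
  adj S0 = S0 ->
  A *m S0 - S0 *m adj A = 'i *: (Pi0 *m Jmx p *m adj Pi0) ->
  (forall r, (r <= N)%N -> \det (S_seq A S0 Pi0 r) != 0) ->
  forall k, (k < N)%N ->
    adj (C_mx A S0 Pi0 k) = C_mx A S0 Pi0 k /\
    C_mx A S0 Pi0 k *m Jmx p *m C_mx A S0 Pi0 k = Jmx p.
Proof.
move=> hA hS0 h0 hS k hk.
have uA : A \in unitmx by rewrite unitmxE unitfE.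
have hAB : A *m invmx A = 1%:M by rewrite mulmxV.
have hBA : invmx A *m A = 1%:M by rewrite mulVmx.
have eS : forall r, S_seq A S0 Pi0 r.+1 = S_seq A S0 Pi0 r
   + invmx A *m S_seq A S0 Pi0 r *m adj (invmx A)
   + invmx A *m (Pi_seq A Pi0 r *m adj (Pi_seq A Pi0 r)) *m adj (invmx A).
  by move=> r; rewrite /= adjV.
have inv : forall r, adj (S_seq A S0 Pi0 r) = S_seq A S0 Pi0 r /\
   A *m S_seq A S0 Pi0 r - S_seq A S0 Pi0 r *m adj A
     = ('i)%R *: (Pi_seq A Pi0 r *m Jmx p *m adj (Pi_seq A Pi0 r)).
  elim=> [|r [IH1 IH2]]; first by split.
  rewrite eS.
  exact: (@step_inv _ _ _ _ _ _ _ _ hAB hBA (adjJ _ p) (JJ _ p) IH1 IH2).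
have uS : forall r, (r <= N)%N -> S_seq A S0 Pi0 r \in unitmx.
  by move=> r hr; rewrite unitmxE unitfE hS.
have uk := uS k (ltnW hk).
have uk1 := uS k.+1 hk.
have [h1k h2k] := inv k.
have [h1k1 h2k1] := inv k.+1.
set P := Pi_seq A Pi0 k.
set S := S_seq A S0 Pi0 k.
set X := invmx S.
set Y := invmx (S_seq A S0 Pi0 k.+1).
have hX : adj X = X by rewrite /X adjV h1k.
have hY : adj Y = Y by rewrite /Y adjV h1k1.
split.
  rewrite /C_mx -/P -/S -/X -/Y !adjB adjD adj1 !adjM !adjK hX hY.
  by rewrite !mulmxA.
rewrite /C_mx -/P -/S -/X -/Y.
apply: (@key _ _ _ _ _ _ _ _ _ _ hAB (adjJ _ p) (JJ _ p) hX hY).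
- by [].
- apply: (@invid _ _ _ _ _ _ _ _ _ _ h2k); by rewrite ?mulmxV ?mulVmx.
- apply: (@invid _ _ _ _ _ _ _ _ _ _ h2k1); by rewrite ?mulmxV ?mulVmx.
- apply: (@cross _ _ _ _ _ _ _ _ _ _ hAB (adjJ _ p) (JJ _ p) _ _ h2k).
  + by rewrite mulVmx.
  + by rewrite -eS mulmxV.
Qed.
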